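(* Let $X$ be an irreducible positive recurrent Markov chain on a countable state space $S$ with transition matrix $P$ and stationary distribution $\pi$. Fix a finite nonempty set $K\subseteq S$ and a sequence $(A_n:n\ge1)$ of finite subsets of $S$ with $A_n\supseteq K$ and $A_n\nearrow S$. For each $n$, with $T_n=\inf\{j\ge1:X_j\notin A_n\}$, let $G_n(x,y)=P_x(X_{T_K}=y,\,T_K<T_n)$ for $x,y\in K$, and assume $G_n$ is irreducible. Define two stochastic matrices on $K$: (1) (Perron–Frobenius) Let $\lambda_n>0$ be the Perron eigenvalue of $G_n$ with positive left and right eigenvectors $\nu_n,h_n$ normalized so that $\sum_{x\in K}\nu_n(x)h_n(x)=1$; set $P_{1,n}(x,y)=G_n(x,y)h_n(y)/(\lambda_n h_n(x))$, whose unique stationary distribution is $\pi_{1,n}(x)=\nu_n(x)h_n(x)$. (2) (Row normalization) Set $P_{2,n}(x,y)=G_n(x,y)/\sum_{y'\in K}G_n(x,y')$, with unique stationary distribution $\pi_{2,n}$. For a non-negative function $r:S\to[0,\infty)$ and $i=1,2$ define $$\tilde\pi_{i,n}(r)=\frac{E_{\pi_{i,n}}\sum_{j=0}^{(T_n\wedge T_K)-1}r(X_j)}{E_{\pi_{i,n}}(T_n\wedge T_K)}.$$ Then $\tilde\pi_{i,n}(r)\to\pi r=\sum_{x\in S}\pi(x)r(x)$ as $n\to\infty$, for $i=1,2$.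
   Context: $P_x,E_x$ denote probability and expectation for the chain started at $x$, and $E_\mu=\sum_x\mu(x)E_x$. $T_K=\inf\{j\ge1:X_j\in K\}$, and $a\wedge b=\min(a,b)$. *)

(* Defs.v *)
From HB Require Import structures.
From mathcomp Require Import all_boot all_order all_algebra.
From mathcomp Require Import all_classical all_reals all_analysis.
Set Implicit Arguments. Unset Strict Implicit. Unset Printing Implicit Defensive.
Import Order.TTheory GRing.Theory Num.Theory.
Local Open Scope classical_set_scope.
Local Open Scope ring_scope.

Section MC.
Variables (R : realType) (S : countType).
Implicit Types (P : S -> S -> R) (x y : S) (s : seq S).

(* Weight P(x,x1) P(x1,x2) ... P(x_{m-1},x_m) of the finite path x :: s,
   i.e. P_x(X_1 = x1, ..., X_m = x_m). *)
Fixpoint pathw P x s : R :=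
  if s is y :: s' then P x y * pathw P y s' else 1.

Definition stochastic P :=
  (forall x y, 0 <= P x y) /\ (forall x, (\esum_(y in [set: S]) (P x y)%:E = 1)%E).

Definition irreducible P :=
  forall x y, exists s, last x s = y /\ 0 < pathw P x s.

(* E_x T_x = sum_{m>=0} P_x(T_x > m), with T_x = inf{j>=1 : X_j = x} *)
Definition return_time_exp P x : \bar R :=
  \esum_(s in [set s : seq S | forall z, z \in s -> z != x]) (pathw P x s)%:E.

Definition positive_recurrent P := forall x, (return_time_exp P x < +oo)%E.

Definition stationary_distribution P (pi : S -> R) :=
  (forall x, 0 <= pi x) /\ (\esum_(x in [set: S]) (pi x)%:E = 1)%E /\
  (forall y, \esum_(x in [set: S]) (pi x * P x y)%:E = (pi y)%:E).

Definition avoid_paths (B K : set S) := [set s : seq S | forall z, z \in s -> z \in B `\` K].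

(* G_B(x,y) = P_x(X_{T_K} = y, T_K < T_B), T_B = inf{j>=1 : X_j \notin B};
   the event is the disjoint union of the cylinders
   {X_1..X_m in B\K, X_{m+1} = y}, m >= 0 (y in K, K `<=` B). *)
Definition Gker P (B K : set S) x y : \bar R :=
  \esum_(s in avoid_paths B K) (pathw P x (rcons s y))%:E.

Definition Gmat P B K x y : R := fine (Gker P B K x y).

Definition irreducible_on (K : set S) (G : S -> S -> R) :=
  forall x y, K x -> K y -> exists s : seq S,
    s != [::] /\ (forall z, z \in s -> K z) /\ last x s = y /\
    0 < pathw G x s.

(* E_x sum_{j=0}^{(T_B /\ T_K)-1} r(X_j)
   = sum_{m>=0} E_x[ r(X_m) ; X_1..X_m in B\K ] *)
Definition killed_exp P (B K : set S) (r : S -> R) x : \bar R :=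
  \esum_(s in avoid_paths B K) (pathw P x s * r (last x s))%:E.

Definition tilde_pi P (B K : set S) (mu : S -> R) (r : S -> R) : \bar R :=
  ((\esum_(x in K) (mu x)%:E * killed_exp P B K r x) /
   (\esum_(x in K) (mu x)%:E * killed_exp P B K (fun _ => 1%R) x))%E.

Definition P2mat P B K x y : R :=
  Gmat P B K x y / fine (\esum_(y' in K) Gker P B K x y').

Definition stationary_on (K : set S) (Q : S -> S -> R) (mu : S -> R) :=
  (forall x, K x -> 0 <= mu x) /\ (\esum_(x in K) (mu x)%:E = 1)%E /\
  (forall y, K y -> \esum_(x in K) (mu x * Q x y)%:E = (mu y)%:E).

End MC.

(* Main.v *)
Require Import Defs.
From HB Require Import structures.
From mathcomp Require Import all_boot all_order all_algebra.
From mathcomp Require Import all_classical all_reals all_analysis.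
Import Order.TTheory GRing.Theory Num.Theory.
Local Open Scope classical_set_scope.
Local Open Scope ring_scope.

Set Implicit Arguments. Unset Strict Implicit. Unset Printing Implicit Defensive.

Section esum_tools.
Context {R : realType}.
Local Open Scope ereal_scope.

Lemma esum_subset (T : choiceType) (A B : set T) (f : T -> \bar R) :
  A `<=` B -> (forall t, B t -> 0 <= f t) ->
  \esum_(t in A) f t <= \esum_(t in B) f t.
Proof.
move=> AB f0; apply: ge_ereal_sup => _ [X [finX XA] <-].
apply: ereal_sup_ubound; exists X => //; split => //; exact: subset_trans XA AB.
Qed.

Lemma esum_ge1 (T : choiceType) (D : set T) (f : T -> \bar R) t :
  D t -> (forall t, D t -> 0 <= f t) -> f t <= \esum_(i in D) f i.
Proof.
move=> Dt f0; apply: esum_ge; exists [set t]; first by split => // x ->.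
by rewrite fsbig_set1.
Qed.

Lemma fsumZl_sub (T : choiceType) (D X : set T) (c : R) (f : T -> \bar R) :
  finite_set X -> X `<=` D -> (forall t, D t -> 0 <= f t) ->
  \sum_(i \in X) (c%:E * f i) = c%:E * \sum_(i \in X) f i.
Proof.
move=> finX XD f0; rewrite !fsbig_finite// big_seq [in RHS]big_seq.
rewrite ge0_sume_distrr// => i; rewrite in_fset_set// inE => Xi; exact: f0 (XD _ Xi).
Qed.

Lemma esumZl (T : choiceType) (D : set T) (c : R) (f : T -> \bar R) :
  (0 <= c)%R -> (forall t, D t -> 0 <= f t) ->
  \esum_(t in D) (c%:E * f t) = c%:E * \esum_(t in D) f t.
Proof.
move=> c0 f0; rewrite /esum -ereal_supZl//; last first.
  by apply/set0P; exists 0%E; exists set0; [exact: fsets_set0|rewrite fsbig_set0].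
apply: f_equal; apply/seteqP; split => y.
  move=> [X [finX XD] <-]; exists (\sum_(i \in X) f i); first by exists X.
  by rewrite (fsumZl_sub _ finX XD f0).
move=> [z [X [finX XD] <-] <-]; exists X => //.
by rewrite (fsumZl_sub _ finX XD f0).
Qed.

Lemma esumZr (T : choiceType) (D : set T) (c : R) (f : T -> \bar R) :
  (0 <= c)%R -> (forall t, D t -> 0 <= f t) ->
  \esum_(t in D) (f t * c%:E) = (\esum_(t in D) f t) * c%:E.
Proof.
move=> c0 f0; rewrite muleC -esumZl//; apply: eq_esum => t _; exact: muleC.
Qed.

Lemma esum_partition (T U : choiceType) (D : set T) (g : T -> U) (f : T -> \bar R) :
  (forall t, D t -> 0 <= f t) ->
  \esum_(u in [set: U]) \esum_(t in [set t | D t /\ g t = u]) f t =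
  \esum_(t in D) f t.
Proof.
move=> f0; rewrite esum_esum; last by move=> u t _ [/f0].
rewrite (reindex_esum D _ (fun t => (g t, t))) //; split.
- by move=> t Dt /=; split.
- by move=> t1 t2 _ _ [].
- by move=> [u t] /= [_ [Dt <-]]; exists t.
Qed.

Lemma esum_swap (T U : choiceType) (I : set T) (J : set U) (a : T -> U -> \bar R) :
  (forall i j, I i -> J j -> 0 <= a i j) ->
  \esum_(i in I) \esum_(j in J) a i j = \esum_(j in J) \esum_(i in I) a i j.
Proof.
move=> a0; rewrite !esum_esum; [|by move=> i j Ii Jj; apply: a0|by move=> i j Ii Jj; apply: a0].
rewrite (reindex_esum (I `*` J) (J `*` I) (fun p => (p.2, p.1))) //; split.
- by move=> [i j] [/= Ii Jj].
- by move=> [i1 j1] [i2 j2] _ _ [-> ->].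
- by move=> [j i] [/= Jj Ii]; exists (i, j).
Qed.

Lemma esum_eq_termwise (T : choiceType) (D : set T) (f g : T -> \bar R) t :
  (forall t, D t -> 0 <= f t) -> (forall t, D t -> f t <= g t) ->
  \esum_(i in D) g i = \esum_(i in D) f i ->
  \esum_(i in D) f i < +oo -> D t -> g t = f t.
Proof.
move=> f0 fg eqs fin Dt.
have g0 : forall i, D i -> 0 <= g i by move=> i Di; exact: le_trans (f0 _ Di) (fg _ Di).
have Dt1 : D `&` [set t] = [set t] by apply/seteqP; split=> [x [] //|x ->]. 
have := esumID [set t] D f f0; have := esumID [set t] D g g0.
rewrite Dt1 esum_set1 ?g0// esum_set1 ?f0// eqs => -> eqf.
set X := \esum_(i in D `&` ~` [set t]) f i.
have X0 : 0 <= X by apply: esum_ge0 => i [/f0].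
have Xfin : X \is a fin_num.
  rewrite ge0_fin_numE//; apply: le_lt_trans fin; apply: esum_subset => // i [].
have le1 : g t + X <= f t + X.
  rewrite -eqf; apply: leeD2l; apply: le_esum => i [Di _]; exact: fg.
apply/eqP; rewrite eq_le fg// andbT.
by move: le1; rewrite leeD2rE.
Qed.

End esum_tools.

Section esum_incr.
Context {R : realType}.
Local Open Scope ereal_scope.

Lemma incr_sub (T : Type) (Dn : nat -> set T) m n :
  (forall n, Dn n `<=` Dn n.+1) -> (m <= n)%N -> Dn m `<=` Dn n.
Proof.
move=> incr; elim: n => [|n IH]; first by rewrite leqn0 => /eqP ->.
rewrite leq_eqVlt => /orP[/eqP -> //|]; rewrite ltnS => /IH mn.
exact: subset_trans mn (incr n).
Qed.

Lemma seq_in_some_n (T : eqType) (Dn : nat -> set T) (xs : seq T) :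
  (forall n, Dn n `<=` Dn n.+1) -> (forall x, x \in xs -> exists n, Dn n x) ->
  exists n, forall x, x \in xs -> Dn n x.
Proof.
move=> incr; elim: xs => [|y ys IH] H; first by exists 0%N.
have [n1 Hn1] : exists n, Dn n y by apply: H; rewrite inE eqxx.
have [n2 Hn2] : exists n, forall x, x \in ys -> Dn n x.
  by apply: IH => x xys; apply: H; rewrite inE xys orbT.
exists (maxn n1 n2) => x; rewrite inE => /orP[/eqP ->|xys].
  exact: (incr_sub incr (leq_maxl n1 n2)).
exact: (incr_sub incr (leq_maxr n1 n2)) (Hn2 _ xys).
Qed.

Lemma esum_incr_le (T : choiceType) (Dn : nat -> set T) (D : set T)
    (f : T -> \bar R) (c : \bar R) :
  (forall n, Dn n `<=` Dn n.+1) -> (forall t, D t -> exists n, Dn n t) ->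
  (forall n, \esum_(t in Dn n) f t <= c) ->
  \esum_(t in D) f t <= c.
Proof.
move=> incr cov le; apply: ge_ereal_sup => _ [X [finX XD] <-].
have [fs Xfs] := finite_fsetP.1 finX.
have [n Hn] : exists n, forall x, x \in finmap.enum_fset fs -> Dn n x.
  apply: (@seq_in_some_n _ _ (finmap.enum_fset fs)) => // x xfs; apply: cov; apply: XD; rewrite Xfs; exact: xfs.
apply: le_trans (le n); apply: ereal_sup_ubound; exists X => //; split => //.
by move=> x; rewrite Xfs => /= xfs; exact: Hn.
Qed.

Lemma esum_incr_cvg (T : choiceType) (Dn : nat -> set T) (D : set T)
    (f : T -> \bar R) :
  (forall n, Dn n `<=` Dn n.+1) -> (forall n, Dn n `<=` D) ->
  (forall t, D t -> exists n, Dn n t) -> (forall t, D t -> 0 <= f t) ->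
  (fun n => \esum_(t in Dn n) f t) @ \oo --> \esum_(t in D) f t.
Proof.
move=> incr sub cov f0.
have nd : nondecreasing_seq (fun n => \esum_(t in Dn n) f t).
  move=> m n mn; apply: esum_subset; first exact: incr_sub.
  by move=> t /(sub n) /f0.
suff -> : \esum_(t in D) f t = ereal_sup (range (fun n => \esum_(t in Dn n) f t)).
  exact: ereal_nondecreasing_cvgn.
apply/eqP; rewrite eq_le; apply/andP; split.
  apply: esum_incr_le => // n; apply: ereal_sup_ubound; exists n => //.
apply: ge_ereal_sup => _ [n _ <-]; apply: esum_subset => //.
Qed.

End esum_incr.

Section markov.
Context {R : realType} {S : countType}.
Context (P : S -> S -> R) (K : set S) (pi : S -> R).
Context (P0 : forall x y, (0 <= P x y)%R).
Local Open Scope ereal_scope.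

Definition AV := avoid_paths [set: S] K.

Lemma pathw_rcons x s y :
  pathw P x (rcons s y) = (pathw P x s * P (last x s) y)%R.
Proof.
elim: s x => [|z s IH] x /=; first by rewrite mul1r mulr1.
by rewrite IH mulrA.
Qed.

Lemma pathw_ge0 x s : (0 <= pathw P x s)%R.
Proof. elim: s x => [|z s IH] x //=; exact: mulr_ge0. Qed.

Lemma AVP s : AV s <-> (forall z, z \in s -> ~ K z).
Proof.
split => H z zs.
  by move: (H z zs); rewrite in_setE => -[].
by rewrite in_setE; split => //; exact: H.
Qed.

Lemma AV_nil : AV [::].
Proof. by apply/AVP. Qed.

Lemma AV_rcons s y : AV (rcons s y) <-> AV s /\ ~ K y.
Proof.
rewrite !AVP; split.
  move=> H; split; first by move=> z zs; apply: H; rewrite mem_rcons inE zs orbT.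
  by apply: H; rewrite mem_rcons inE eqxx.
move=> [H Ky] z; rewrite mem_rcons inE => /orP[/eqP ->//|]; exact: H.
Qed.

Lemma AV_last x s : AV s -> s != [::] -> ~ K (last x s).
Proof.
move=> /AVP H; case/lastP: s H => [//|s z] H _.
by rewrite last_rcons; apply: H; rewrite mem_rcons inE eqxx.
Qed.

Definition wt (p : S * seq S) := (pi p.1 * pathw P p.1 p.2)%R.

Definition Dpre (c : nat -> bool) :=
  [set p : S * seq S | K p.1 /\ AV p.2 /\ c (size p.2)].

Definition Dg (c : nat -> bool) (y : S) :=
  [set p : S * seq S | Dpre c p /\ last p.1 p.2 = y].

Definition mug c y := \esum_(p in Dg c y) (wt p)%:E.

Lemma mugE (c : nat -> bool) y : mug c y = \esum_(p in Dg c y) (wt p)%:E.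
Proof. by []. Qed.

Context (pi0 : forall x, (0 <= pi x)%R).

Lemma wt_ge0 p : (0 <= wt p)%R.
Proof. exact: mulr_ge0 (pi0 _) (pathw_ge0 _ _). Qed.

Lemma mug_ge0 (c : nat -> bool) y : 0 <= mug c y.
Proof. by apply: esum_ge0 => p _; rewrite lee_fin wt_ge0. Qed.

Lemma Dg_K (c : nat -> bool) y : K y -> c 0%N -> Dg c y = [set (y, [::])].
Proof.
move=> Ky c0; apply/seteqP; split => [[x s] /= [[Kx [AVs _]] lst]|[x s] /= [-> ->]].
  case: (eqVneq s [::]) => [sn|sn]; first by move: lst; rewrite sn /= => ->.
  by exfalso; apply: (AV_last (x:=x) AVs sn); rewrite lst.
by split => //; split => //; split => //; exact: AV_nil.
Qed.

Lemma mug_K (c : nat -> bool) y : K y -> c 0%N -> mug c y = (pi y)%:E.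
Proof.
move=> Ky c0; rewrite /mug Dg_K // esum_set1 ?lee_fin ?wt_ge0 //.
by rewrite /wt /= mulr1.
Qed.

Lemma sum_mug_P (c : nat -> bool) y :
  \esum_(z in [set: S]) (mug c z * (P z y)%:E) =
  \esum_(p in Dpre c) ((wt p * P (last p.1 p.2) y)%R)%:E.
Proof.
rewrite -(esum_partition (fun p : S * seq S => last p.1 p.2)); last first.
  by move=> p _; rewrite lee_fin mulr_ge0 // wt_ge0.
apply: eq_esum => z _; rewrite /mug -esumZr //; last first.
  by move=> p _; rewrite lee_fin wt_ge0.
by apply: eq_esum => p [_ /= ->].
Qed.

Lemma mug_rcons (c : nat -> bool) y : ~ K y ->
  mug c y = \esum_(p in Dpre (fun k => c k.+1)) ((wt p * P (last p.1 p.2) y)%R)%:E.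
Proof.
move=> Ky; rewrite /mug (reindex_esum (Dpre (fun k => c k.+1)) (Dg c y)
   (fun p => (p.1, rcons p.2 y))); last first.
  split.
  - move=> [x s] /= [Kx [AVs cs]]; split; last by rewrite last_rcons.
    by split => //; split; [apply/AV_rcons|rewrite size_rcons].
  - by move=> [x1 s1] [x2 s2] _ _ /= [-> /rcons_inj [->]].
  - move=> [x s] /= [[Kx [AVs cs]] lst].
    case/lastP: s Kx AVs cs lst => [|s z] Kx AVs cs lst.
      by exfalso; apply: Ky; rewrite -lst.
    move: lst; rewrite last_rcons => zy; subst z.
    move/AV_rcons: AVs => [AVs _].
    by exists (x, s) => //; split => //; split => //; rewrite -(size_rcons s y).
by apply: eq_esum => -[x s] _; rewrite /wt /= pathw_rcons mulrA.
Qed.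

Lemma mug_step (c : nat -> bool) y : ~ K y ->
  mug c y = \esum_(z in [set: S]) (mug (fun k => c k.+1) z * (P z y)%:E).
Proof. by move=> Ky; rewrite sum_mug_P mug_rcons. Qed.

End markov.

Section markov2.
Context {R : realType} {S : countType}.
Context (P : S -> S -> R) (K : set S) (pi : S -> R).
Context (P0 : forall x y, (0 <= P x y)%R).
Context (pi0 : forall x, (0 <= pi x)%R).
Context (pistat : forall y, \esum_(x in [set: S]) (pi x * P x y)%:E = (pi y)%:E).
Local Open Scope ereal_scope.

Local Notation mug := (mug P K pi).
Local Notation AV := (AV K).
Local Notation Dpre := (Dpre K).
Local Notation wt := (wt P pi).

Lemma mum_le m y : mug (fun k => k <= m)%N y <= (pi y)%:E.
Proof.
elim: m y => [|m IH] y.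
  have [Ky|Ky] := pselect (K y); first by rewrite mug_K.
  rewrite mug_step // esum1 ?lee_fin // => z _.
  have -> : mug (fun k => k.+1 <= 0)%N z = 0.
    by apply: esum1 => -[x s] [[_ [_]]]; rewrite ltn0.
  by rewrite mul0e.
have [Ky|Ky] := pselect (K y); first by rewrite mug_K.
rewrite mug_step //.
have -> : (fun k => k.+1 <= m.+1)%N = (fun k => k <= m)%N.
  by apply: funext => k; rewrite ltnS.
rewrite -pistat; apply: le_esum => z _; rewrite EFinM.
by apply: lee_wpmul2r; [rewrite lee_fin|exact: IH].
Qed.

Lemma mu_le y : mug xpredT y <= (pi y)%:E.
Proof.
apply: (@esum_incr_le _ _ (fun n => Dg K (fun k => k <= n)%N y)).
- by move=> n [x s] [[Kx [AVs sn]] lst]; split => //; split => //; split => //; exact: leqW.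
- by move=> [x s] [[Kx [AVs _]] lst]; exists (size s).
- move=> n; exact: mum_le.
Qed.

Lemma mu_fin y : mug xpredT y \is a fin_num.
Proof.
by rewrite ge0_fin_numE ?mug_ge0 //; apply: le_lt_trans (mu_le y) _; rewrite ltry.
Qed.

Lemma Dpre_T : Dpre xpredT = K `*`` (fun _ => AV).
Proof.
rewrite /Dpre; apply/seteqP; split => -[x s] /=; first by move=> [Kx [AVs _]].
by move=> [Kx AVs].
Qed.

Definition GG x y := Gker P [set: S] K x y.

Lemma sum_mu_P_G y :
  \esum_(z in [set: S]) (mug xpredT z * (P z y)%:E) =
  \esum_(x in K) ((pi x)%:E * GG x y).
Proof.
rewrite sum_mug_P //.
transitivity (\esum_(x in K) \esum_(s in AV) ((pi x * pathw P x (rcons s y))%R)%:E); last first.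
  apply: eq_esum => x Kx; rewrite /GG /Gker -esumZl //.
  by move=> s _; rewrite lee_fin pathw_ge0.
rewrite esum_esum; last first.
  by move=> x s Kx _; rewrite lee_fin mulr_ge0 // pathw_ge0.
rewrite Dpre_T; apply: eq_esum => -[x s] _ /=.
by rewrite pathw_rcons // /wt mulrA.
Qed.

End markov2.

Section markov3.
Context {R : realType} {S : countType}.
Context (P : S -> S -> R) (K : set S).
Context (P0 : forall x y, (0 <= P x y)%R).
Context (psum : forall x, (\esum_(y in [set: S]) (P x y)%:E = 1)%E).
Local Open Scope ereal_scope.

Local Notation AV := (AV K).
Local Notation GG := (GG P K).

Lemma G_stoch x : \esum_(s in AV) (pathw P x s)%:E < +oo ->
  \esum_(y in K) GG x y = 1.
Proof.
move=> bfin.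
set b := \esum_(s in AV) (pathw P x s)%:E.
set B' := \esum_(s in AV `&` ~` [set [::]]) (pathw P x s)%:E.
have pw0 : forall s, 0 <= (pathw P x s)%:E by move=> s; rewrite lee_fin pathw_ge0.
have e1 : b = 1 + B'.
  rewrite /b (esumID [set [::]]) //.
  have -> : AV `&` [set [::]] = [set [::]].
    by apply/seteqP; split => [s [] //|s ->]; split => //; exact: AV_nil.
  by rewrite esum_set1.
have e2 : b = \esum_(y in K) GG x y + B'.
  transitivity (\esum_(s in AV) \esum_(y in [set: S]) (pathw P x (rcons s y))%:E).
    rewrite /b; apply: eq_esum => s _.
    under eq_esum do rewrite pathw_rcons // EFinM.
    rewrite esumZl; [by rewrite psum mule1 | exact: pathw_ge0 | by move=> y _; rewrite lee_fin].
  rewrite esum_esum; last by move=> s y _ _.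
  rewrite (esumID [set q : seq S * S | K q.2]); last by move=> q _.
  congr (_ + _).
    rewrite /GG /Gker esum_swap; last by move=> y s _ _.
    rewrite esum_esum; last by move=> s y _ _.
    have -> : AV `*`` (fun _ => [set: S]) `&` [set q : seq S * S | K q.2] =
              AV `*`` (fun _ => K).
      by apply/seteqP; split => -[s y] /=; [move=> [[]]|move=> []].
    by [].
  rewrite /B' (reindex_esum (AV `*`` (fun _ => [set: S]) `&` ~` [set q : seq S * S | K q.2])
     (AV `&` ~` [set [::]]) (fun q => rcons q.1 q.2)) //.
  split.
  - move=> [s y] /= [[AVs _] Ky]; split; first by apply/AV_rcons.
    by move=> /= /(congr1 size); rewrite size_rcons.
  - by move=> [s1 y1] [s2 y2] _ _ /= /rcons_inj [-> ->].
  - move=> s [AVs sn]; case/lastP: s AVs sn => [|s z] AVs sn.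
      by exfalso; apply: sn.
    move/AV_rcons: AVs => [AVs Kz].
    by exists (s, z).
have B'fin : B' \is a fin_num.
  rewrite ge0_fin_numE; last by apply: esum_ge0 => s _.
  apply: le_lt_trans bfin; apply: esum_subset => // s [].
move: e2; rewrite e1 => /(congr1 (fun z => z - B')).
by rewrite !addeK.
Qed.

End markov3.

Section markov4.
Context {R : realType} {S : countType}.
Context (P : S -> S -> R) (K : set S) (pi : S -> R).
Context (P0 : forall x y, (0 <= P x y)%R).
Context (psum : forall x, (\esum_(y in [set: S]) (P x y)%:E = 1)%E).
Context (pi0 : forall x, (0 <= pi x)%R).
Context (pisum : (\esum_(x in [set: S]) (pi x)%:E = 1)%E).
Context (pistat : forall y, \esum_(x in [set: S]) (pi x * P x y)%:E = (pi y)%:E).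
Context (Pirr : irreducible P) (Prec : positive_recurrent P).
Local Open Scope ereal_scope.

Local Notation mug := (mug P K pi).
Local Notation AV := (AV K).
Local Notation GG := (GG P K).

Lemma b_le_ret x : K x ->
  \esum_(s in AV) (pathw P x s)%:E <= return_time_exp P x.
Proof.
move=> Kx; apply: esum_subset; last by move=> s _; rewrite lee_fin pathw_ge0.
move=> s /AVP H z zs; apply/eqP => zx; apply: (H z zs); by rewrite zx.
Qed.

Lemma b_fin x : K x -> \esum_(s in AV) (pathw P x s)%:E < +oo.
Proof. by move=> Kx; apply: le_lt_trans (b_le_ret Kx) (Prec x). Qed.

Lemma GG_ge0 x y : 0 <= GG x y.
Proof. by apply: esum_ge0 => s _; rewrite lee_fin pathw_ge0. Qed.

Lemma piG_le y : \esum_(x in K) ((pi x)%:E * GG x y) <= (pi y)%:E.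
Proof.
rewrite -sum_mu_P_G // -pistat; apply: le_esum => z _; rewrite EFinM.
by apply: lee_wpmul2r; [rewrite lee_fin|exact: mu_le].
Qed.

Lemma piK_fin : \esum_(x in K) (pi x)%:E < +oo.
Proof.
apply: (@le_lt_trans _ _ (\esum_(x in [set: S]) (pi x)%:E)).
  by apply: esum_subset => // x _; rewrite lee_fin.
by rewrite pisum ltry.
Qed.

Lemma piG_eq y : K y -> \esum_(x in K) ((pi x)%:E * GG x y) = (pi y)%:E.
Proof.
move=> Ky; symmetry.
apply: (@esum_eq_termwise _ _ K (fun y => \esum_(x in K) ((pi x)%:E * GG x y))
   (fun y => (pi y)%:E)) => //.
- by move=> t _; apply: esum_ge0 => x _; rewrite mule_ge0 ?lee_fin ?GG_ge0.
- by move=> t _; exact: piG_le.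
- rewrite esum_swap; last by move=> t x _ _; rewrite mule_ge0 ?lee_fin ?GG_ge0.
  apply: eq_esum => x Kx; rewrite esumZl //; last by move=> t _; exact: GG_ge0.
  by rewrite G_stoch // ?mule1 //; exact: b_fin.
- rewrite esum_swap; last by move=> t x _ _; rewrite mule_ge0 ?lee_fin ?GG_ge0.
  rewrite (@eq_esum _ _ _ _ (fun x => (pi x)%:E)) ?piK_fin // => x Kx.
  rewrite esumZl //; last by move=> t _; exact: GG_ge0.
  by rewrite G_stoch // ?mule1 //; exact: b_fin.
Qed.

Lemma mu_inv y :
  \esum_(z in [set: S]) (mug xpredT z * (P z y)%:E) = mug xpredT y.
Proof.
have [Ky|Ky] := pselect (K y).
  by rewrite sum_mu_P_G // piG_eq // mug_K.
by rewrite [RHS]mug_step.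
Qed.

Lemma mu_eq_pi (k : S) : K k -> forall y, mug xpredT y = (pi y)%:E.
Proof.
move=> Kk y; have [s [lst pos]] := Pirr y k.
elim: s y lst pos => [|z s IH] y /= lst pos.
  by rewrite lst mug_K.
have Pyz : (0 < P y z)%R.
  rewrite lt0r P0 andbT; apply: contraTneq pos => ->; by rewrite mul0r ltxx.
have pz : (0 < pathw P z s)%R by rewrite -(pmulr_rgt0 _ Pyz).
have muz := IH z lst pz.
have := @esum_eq_termwise _ _ [set: S] (fun w => mug xpredT w * (P w z)%:E)
   (fun w => (pi w * P w z)%R%:E) y.
rewrite pistat mu_inv muz => /(_ _ _ erefl) H.
have f0 : forall t, [set: S] t -> 0 <= mug xpredT t * (P t z)%:E.
  by move=> t _; rewrite mule_ge0 ?mug_ge0 ?lee_fin.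
have fg : forall t, [set: S] t -> mug xpredT t * (P t z)%:E <= (pi t * P t z)%R%:E.
  by move=> t _; rewrite EFinM; apply: lee_wpmul2r; [rewrite lee_fin|exact: mu_le].
have eq1 := H f0 fg (ltry _) I.
have mf := mu_fin K P0 pi0 pistat y.
rewrite -(fineK mf); congr EFin; apply: (mulIf (lt0r_neq0 Pyz)); apply: EFin_inj.
by rewrite EFinM fineK // eq1.
Qed.

Lemma cycle_formula (k : S) (r : S -> R) : K k -> (forall x, (0 <= r x)%R) ->
  \esum_(x in K) ((pi x)%:E * killed_exp P [set: S] K r x) =
  \esum_(y in [set: S]) ((pi y * r y)%R)%:E.
Proof.
move=> Kk r0.
have t0 : forall x s, 0 <= ((pathw P x s * r (last x s))%R)%:E.
  by move=> x s; rewrite lee_fin mulr_ge0 // pathw_ge0.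
transitivity (\esum_(x in K) \esum_(s in AV)
   ((pi x * (pathw P x s * r (last x s)))%R)%:E).
  apply: eq_esum => x Kx; rewrite /killed_exp -esumZl //.
rewrite esum_esum; last by move=> x s _ _; rewrite lee_fin !mulr_ge0 // pathw_ge0.
rewrite -Dpre_T.
rewrite -(esum_partition (fun p : S * seq S => last p.1 p.2)); last first.
  by move=> p _; rewrite lee_fin !mulr_ge0 // pathw_ge0.
apply: eq_esum => y _.
rewrite EFinM -(mu_eq_pi Kk y) mugE -esumZr //; last first.
  by move=> p _; rewrite lee_fin wt_ge0.
by apply: eq_esum => -[x s] [_ /= <-]; rewrite /wt mulrA.
Qed.

Lemma pi_path z s : (pi z * pathw P z s <= pi (last z s))%R.
Proof.
elim: s z => [|w s IH] z /=; first by rewrite mulr1.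
apply: le_trans (IH w); rewrite mulrA ler_wpM2r ?pathw_ge0 //.
rewrite -lee_fin -pistat; apply: (@esum_ge1 _ _ [set: S] (fun x => (pi x * P x w)%R%:E)) => //.
by move=> t _; rewrite lee_fin mulr_ge0.
Qed.

Lemma pi_gt0 y : (0 < pi y)%R.
Proof.
have [z pz] : exists z, (0 < pi z)%R.
  apply: contrapT => H.
  have e0 : \esum_(x in [set: S]) (pi x)%:E = 0.
    apply: esum1 => x _.
    have : ~ (0 < pi x)%R by move=> h; apply: H; exists x.
    by move/negP; rewrite lt0r pi0 andbT negbK => /eqP ->.
  by move: pisum; rewrite e0 => -[] /eqP; rewrite eq_sym oner_eq0.
have [s [lst pos]] := Pirr z y.
by rewrite -lst; apply: lt_le_trans (pi_path z s); exact: mulr_gt0.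
Qed.

End markov4.

Section linalg.
Context {R : realType} {S : countType}.
Context (ks : seq S) (G : S -> S -> R) (p : S -> R).
Context (G0 : forall x y, x \in ks -> y \in ks -> 0 <= G x y).
Context (Grow : forall x, x \in ks -> \sum_(y <- ks) G x y = 1).
Context (Girr : forall x y, x \in ks -> y \in ks -> exists s : seq S,
   (forall z, z \in s -> z \in ks) /\ last x s = y /\ 0 < pathw G x s).
Context (pstat : forall y, y \in ks -> \sum_(x <- ks) p x * G x y = p y).
Context (psum1 : \sum_(x <- ks) p x = 1).

Lemma exists_max (U : S -> R) (s : seq S) : s != [::] ->
  exists2 x, x \in s & forall y, y \in s -> U y <= U x.
Proof.
elim: s => [//|a s IH] _; case: (eqVneq s [::]) => [->|sn].
  by exists a => [|y]; rewrite ?inE ?eqxx // => /eqP ->.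
have [b bs Hb] := IH sn.
have [ab|ba] := leP (U a) (U b).
  exists b; first by rewrite inE bs orbT.
  by move=> y; rewrite inE => /orP[/eqP ->//|/Hb].
exists a; first by rewrite inE eqxx.
move=> y; rewrite inE => /orP[/eqP ->//|/Hb yb]; exact: le_trans yb (ltW ba).
Qed.

Lemma pathw_ge0_in x s : x \in ks -> (forall z, z \in s -> z \in ks) ->
  0 <= pathw G x s.
Proof.
elim: s x => [|z s IH] x xk sk //=.
apply: mulr_ge0; first by apply: G0 => //; apply: sk; rewrite inE eqxx.
apply: IH; first by apply: sk; rewrite inE eqxx.
by move=> w ws; apply: sk; rewrite inE ws orbT.
Qed.

Lemma harm_step (U : S -> R) M x y : x \in ks -> y \in ks -> U x = M ->
  (forall z, z \in ks -> U z <= M) ->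
  U x = \sum_(z <- ks) G x z * U z -> 0 < G x y -> U y = M.
Proof.
move=> xk yk UxM Mmax harm Gxy.
have e0 : \sum_(z <- ks | z \in ks) G x z * (M - U z) = 0.
  rewrite -big_seq.
  under eq_bigr do rewrite mulrBr.
  by rewrite sumrB -big_distrl /= Grow // mul1r -harm UxM subrr.
move/eqP: e0; rewrite psumr_eq0; last first.
  by move=> z zk; rewrite mulr_ge0 // ?G0 // subr_ge0 Mmax.
move=> /allP /(_ y yk); rewrite yk /= mulf_eq0 (gt_eqF Gxy) /= subr_eq0.
by move=> /eqP ->.
Qed.

Lemma harm_const (U : S -> R) : 
  (forall x, x \in ks -> U x = \sum_(y <- ks) G x y * U y) ->
  forall x y, x \in ks -> y \in ks -> U x = U y.
Proof.
move=> harm x y xk yk.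
have ksn : ks != [::] by apply/negP => /eqP kn; rewrite kn in xk.
have [m mk Hm] := exists_max U ksn.
suff allM : forall w, w \in ks -> U w = U m by rewrite !allM.
move=> w wk; have [s [sk [lst pos]]] := Girr mk wk.
rewrite -lst; elim: s m mk {Hm lst} (Hm) sk pos => [//|z s IH] a ak Ha sk /= pos.
have zk : z \in ks by apply: sk; rewrite inE eqxx.
have sk' : forall w, w \in s -> w \in ks by move=> w' ws; apply: sk; rewrite inE ws orbT.
have pw0 := pathw_ge0_in zk sk'.
have Gaz : 0 < G a z.
  rewrite lt0r G0 // andbT; apply: contraTneq pos => ->; by rewrite mul0r ltxx.
have Uz : U z = U a by apply: (harm_step ak zk erefl Ha (harm a ak) Gaz).
have pz : 0 < pathw G z s by rewrite -(pmulr_rgt0 _ Gaz).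
rewrite (IH z zk) // ?Uz // => w' w'k; rewrite Uz; exact: Ha.
Qed.

Lemma inj_S (U : S -> R) :
  (forall x, x \in ks -> U x - \sum_(y <- ks) G x y * U y + \sum_(y <- ks) p y * U y = 0) ->
  forall x, x \in ks -> U x = 0.
Proof.
move=> H.
set c := \sum_(y <- ks) p y * U y.
have c0 : c = 0.
  have : \sum_(x <- ks) p x * (U x - \sum_(y <- ks) G x y * U y + c) = 0.
    by rewrite big_seq big1 // => x xk; rewrite H // mulr0.
  rewrite big_seq_cond.
  under eq_bigr do rewrite mulrDr mulrBr.
  rewrite -big_seq_cond big_split sumrB /= -big_distrl /= psum1 mul1r.
  have -> : \sum_(x <- ks) p x * \sum_(y <- ks) G x y * U y = c.
    under eq_bigr do rewrite big_distrr /=.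
    rewrite exchange_big /= big_seq [RHS]big_seq; apply: eq_bigr => y yk.
    by under eq_bigr do rewrite mulrA; rewrite -big_distrl /= pstat.
  by rewrite -/c subrr add0r.
have harm : forall x, x \in ks -> U x = \sum_(y <- ks) G x y * U y.
  by move=> x xk; move: (H x xk); rewrite -/c c0 addr0 => /eqP; rewrite subr_eq0 => /eqP.
move=> x xk.
have Uc : forall y, y \in ks -> U y = U x by move=> y yk; apply: harm_const.
move: c0; rewrite /c big_seq.
under eq_bigr => y yk do rewrite (Uc y yk).
by rewrite -big_seq -big_distrl /= psum1 mul1r.
Qed.

End linalg.

Section linalg_mx.
Context {R : realType} {S : countType}.
Context (ks : seq S) (G : S -> S -> R) (p : S -> R) (x0 : S).
Context (ks_uniq : uniq ks).
Context (G0 : forall x y, x \in ks -> y \in ks -> 0 <= G x y).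
Context (Grow : forall x, x \in ks -> \sum_(y <- ks) G x y = 1).
Context (Girr : forall x y, x \in ks -> y \in ks -> exists s : seq S,
   (forall z, z \in s -> z \in ks) /\ last x s = y /\ 0 < pathw G x s).
Context (pstat : forall y, y \in ks -> \sum_(x <- ks) p x * G x y = p y).
Context (psum1 : \sum_(x <- ks) p x = 1).

Local Notation k := (size ks).
Local Notation e := (fun i : 'I_(size ks) => nth x0 ks i).

Definition Mx : 'M[R]_k := \matrix_(i, j) ((i == j)%:R - G (e i) (e j) + p (e j)).

Lemma e_inj (i j : 'I_k) : e i = e j -> i = j.
Proof.
move=> /eqP; rewrite nth_uniq // => /eqP; exact: val_inj.
Qed.

Lemma ks_e x : x \in ks -> exists i : 'I_k, e i = x.
Proof.
move=> xk; have ik : (index x ks < k)%N by rewrite index_mem.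
by exists (Ordinal ik) => /=; rewrite nth_index.
Qed.

Definition fromv (w : 'I_k -> R) (x : S) := \sum_j (x == e j)%:R * w j.

Lemma fromv_e w i : fromv w (e i) = w i.
Proof.
rewrite /fromv (bigD1 i) //= eqxx mul1r big1 ?addr0 // => j ji.
suff -> : (e i == e j) = false by rewrite mul0r.
by apply/negbTE; apply: contra ji => /eqP /e_inj ->.
Qed.

Lemma sum_ks (F : S -> R) : \sum_(x <- ks) F x = \sum_(j < k) F (e j).
Proof. by rewrite (big_nth x0) big_mkord. Qed.

Lemma Mx_col (w : 'I_k -> R) i :
  \sum_j Mx i j * w j =
  w i - \sum_j G (e i) (e j) * w j + \sum_j p (e j) * w j.
Proof.
under eq_bigr do rewrite mxE !mulrDl mulNr.
rewrite !big_split /= sumrN; congr (_ - _ + _).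
rewrite (bigD1 i) //= eqxx mul1r big1 ?addr0 // => j /negbTE.
by rewrite eq_sym => ->; rewrite mul0r.
Qed.

Lemma Mx_row (w : 'I_k -> R) j :
  \sum_i w i * Mx i j =
  w j - \sum_i w i * G (e i) (e j) + (\sum_i w i) * p (e j).
Proof.
under eq_bigr do rewrite mxE !mulrDr mulrN.
rewrite !big_split /= sumrN -big_distrl; congr (_ - _ + _).
rewrite (bigD1 j) //= eqxx mulr1 big1 ?addr0 // => i /negbTE ->.
by rewrite mulr0.
Qed.

Lemma Mx_unit : Mx \in unitmx.
Proof.
rewrite unitmxE unitfE -det_tr; apply/negP => /det0P [v vn0 vM].
apply: (negP vn0); apply/eqP.
have Mu : Mx *m v^T = 0 by rewrite -(trmxK Mx) -trmx_mul vM trmx0.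
set U := fromv (fun j => v 0 j).
have HU : forall x, x \in ks ->
    U x - \sum_(y <- ks) G x y * U y + \sum_(y <- ks) p y * U y = 0.
  move=> x xk; have [i <-] := ks_e xk.
  rewrite !sum_ks /U fromv_e.
  under eq_bigr do rewrite fromv_e.
  under [X in _ + X]eq_bigr do rewrite fromv_e.
  rewrite -Mx_col.
  transitivity ((Mx *m v^T) i 0); last by rewrite Mu mxE.
  rewrite [RHS]mxE; apply: eq_bigr => j _; congr (_ * _).
  by rewrite mxE.
apply/rowP => j; rewrite mxE -(fromv_e (fun j => v 0 j) j).
exact: (@inj_S R S ks G p G0 Grow Girr pstat psum1 U HU _ (mem_nth x0 (ltn_ord j))).
Qed.

Lemma right_sol (g : S -> R) : exists U : S -> R, forall x, x \in ks ->
  U x - \sum_(y <- ks) G x y * U y + \sum_(y <- ks) p y * U y = g x.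
Proof.
set u := invmx Mx *m \col_i g (e i).
have Mu : Mx *m u = \col_i g (e i) by rewrite /u mulmxA mulmxV ?Mx_unit // mul1mx.
exists (fromv (fun j => u j 0)) => x xk; have [i <-] := ks_e xk.
rewrite !sum_ks fromv_e.
under eq_bigr do rewrite fromv_e.
under [X in _ + X]eq_bigr do rewrite fromv_e.
rewrite -Mx_col.
transitivity ((Mx *m u) i 0); last by rewrite Mu mxE.
by rewrite [RHS]mxE.
Qed.

Lemma left_sol (g : S -> R) : exists V : S -> R, forall y, y \in ks ->
  V y - \sum_(x <- ks) V x * G x y + (\sum_(x <- ks) V x) * p y = g y.
Proof.
set v := \row_j g (e j) *m invmx Mx.
have vM : v *m Mx = \row_j g (e j) by rewrite /v -mulmxA mulVmx ?Mx_unit // mulmx1.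
exists (fromv (fun j => v 0 j)) => y yk; have [j <-] := ks_e yk.
rewrite !sum_ks fromv_e.
under eq_bigr do rewrite fromv_e.
under [X in _ + X * _]eq_bigr do rewrite fromv_e.
rewrite -Mx_row.
transitivity ((v *m Mx) 0 j); last by rewrite vM mxE.
by rewrite [RHS]mxE.
Qed.

End linalg_mx.

Section cvg_tools.
Import numFieldNormedType.Exports.
Context {R : realType}.
Implicit Types (a b : nat -> R).

Lemma cvgD' a b (la lb : R) : a n @[n --> \oo] --> la -> b n @[n --> \oo] --> lb ->
  a n + b n @[n --> \oo] --> la + lb.
Proof. exact: cvgD. Qed.

Lemma cvgB' a b (la lb : R) : a n @[n --> \oo] --> la -> b n @[n --> \oo] --> lb ->
  a n - b n @[n --> \oo] --> la - lb.
Proof. exact: cvgB. Qed.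

Lemma cvgM' a b (la lb : R) : a n @[n --> \oo] --> la -> b n @[n --> \oo] --> lb ->
  a n * b n @[n --> \oo] --> la * lb.
Proof. exact: cvgM. Qed.

Lemma cvgC' (c : R) : (fun _ : nat => c) @ \oo --> c.
Proof. exact: cvg_cst. Qed.

Lemma cvg_sum_seq_in (I : eqType) (r : seq I) (F : I -> nat -> R) (L : I -> R) :
  (forall i, i \in r -> F i n @[n --> \oo] --> L i) ->
  \sum_(i <- r) F i n @[n --> \oo] --> \sum_(i <- r) L i.
Proof.
elim: r => [|i r IH] H.
  under eq_cvg do rewrite big_nil; rewrite big_nil; exact: cvgC'.
under eq_cvg do rewrite big_cons; rewrite big_cons; apply: cvgD'.
  by apply: H; rewrite inE eqxx.
by apply: IH => j jr; apply: H; rewrite inE jr orbT.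
Qed.

Lemma bnd_null a b (B : R) : (forall n, `|a n| <= B) -> b n @[n --> \oo] --> 0 ->
  a n * b n @[n --> \oo] --> 0.
Proof.
move=> aB b0.
have nb : `|b n| @[n --> \oo] --> (0 : R).
  rewrite -[X in _ --> X](@normr0 _ R); exact: cvg_norm.
have Bb : B * `|b n| @[n --> \oo] --> (0 : R).
  rewrite -[X in _ --> X](mulr0 B); apply: cvgM'; [exact: cvg_cst | exact: nb].
have Bb' : - (B * `|b n|) @[n --> \oo] --> (0 : R).
  rewrite -[X in _ --> X]oppr0; exact: cvgN Bb.
apply: (squeeze_cvgr _ Bb' Bb); apply: nearW => n.
by rewrite -ler_norml normrM; apply: ler_wpM2r.
Qed.

End cvg_tools.

Section conv.
Import numFieldNormedType.Exports.
Context {R : realType} {S : countType}.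
Context (ks : seq S) (G : S -> S -> R) (p : S -> R) (x0 : S).
Context (ks_uniq : uniq ks).
Context (G0 : forall x y, x \in ks -> y \in ks -> 0 <= G x y).
Context (Grow : forall x, x \in ks -> \sum_(y <- ks) G x y = 1).
Context (Girr : forall x y, x \in ks -> y \in ks -> exists s : seq S,
   (forall z, z \in s -> z \in ks) /\ last x s = y /\ 0 < pathw G x s).
Context (pstat : forall y, y \in ks -> \sum_(x <- ks) p x * G x y = p y).
Context (psum1 : \sum_(x <- ks) p x = 1).

Lemma sum_delta (F : S -> R) y0 : y0 \in ks ->
  \sum_(x <- ks) F x * (x == y0)%:R = F y0.
Proof.
move=> y0k; rewrite (bigD1_seq y0) //= eqxx mulr1 big1 ?addr0 // => x /negbTE ->.
by rewrite mulr0.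
Qed.

Lemma single_le_sum (F : S -> R) x : x \in ks -> (forall y, y \in ks -> 0 <= F y) ->
  F x <= \sum_(y <- ks) F y.
Proof.
move=> xk F0; rewrite (bigD1_seq x) //= lerDl big_seq_cond sumr_ge0 //.
by move=> y /andP[yk _]; exact: F0.
Qed.

Lemma pG_sum (U : S -> R) :
  \sum_(x <- ks) p x * (\sum_(y <- ks) G x y * U y) = \sum_(y <- ks) p y * U y.
Proof.
under eq_bigr do rewrite big_distrr /=.
rewrite exchange_big /= big_seq [RHS]big_seq; apply: eq_bigr => y yk.
by under eq_bigr do rewrite mulrA; rewrite -big_distrl /= pstat.
Qed.

Lemma poisson_right y0 : y0 \in ks -> exists u : S -> R, forall x, x \in ks ->
  u x - \sum_(z <- ks) G x z * u z = (x == y0)%:R - p y0.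
Proof.
move=> y0k.
have [U HU] := right_sol x0 ks_uniq G0 Grow Girr pstat psum1
  (fun x => (x == y0)%:R - p y0).
set c := \sum_(y <- ks) p y * U y in HU.
suff c0 : c = 0 by exists U => x xk; rewrite -HU // c0 addr0.
have : \sum_(x <- ks) p x * (U x - \sum_(y <- ks) G x y * U y + c) =
       \sum_(x <- ks) p x * ((x == y0)%:R - p y0).
  by apply: eq_big_seq => x xk; rewrite HU.
under eq_bigr do rewrite mulrDr mulrBr.
rewrite big_split /= big_split /= sumrN pG_sum -/c -big_distrl /= psum1 mul1r subrr add0r => ->.
under eq_bigr do rewrite mulrBr.
by rewrite sumrB sum_delta // -big_distrl /= psum1 mul1r subrr.
Qed.

Lemma poisson_left y0 : y0 \in ks -> exists v : S -> R, forall y, y \in ks ->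
  v y - \sum_(x <- ks) v x * G x y = (y == y0)%:R - p y.
Proof.
move=> y0k.
have [V HV] := left_sol x0 ks_uniq G0 Grow Girr pstat psum1
  (fun y => (y == y0)%:R - p y).
set d := \sum_(x <- ks) V x in HV.
suff d0 : d = 0 by exists V => y yk; rewrite -HV // d0 mul0r addr0.
have : \sum_(y <- ks) (V y - \sum_(x <- ks) V x * G x y + d * p y) =
       \sum_(y <- ks) ((y == y0)%:R - p y).
  by apply: eq_big_seq => y yk; rewrite HV.
have L : \sum_(y <- ks) (V y - \sum_(x <- ks) V x * G x y + d * p y) = d.
  rewrite big_split /= big_split /= sumrN -big_distrr /= psum1 mulr1 exchange_big /=.
  have -> : \sum_(x <- ks) \sum_(y <- ks) V x * G x y = d.
    rewrite /d big_seq [RHS]big_seq; apply: eq_bigr => x xk.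
    by rewrite -big_distrr /= Grow // mulr1.
  by rewrite subrr add0r.
have Rr : \sum_(y <- ks) ((y == y0)%:R - p y) = 0 :> R.
  rewrite big_split /= sumrN psum1.
  have -> : \sum_(y <- ks) (y == y0)%:R = 1 :> R.
    transitivity (\sum_(x <- ks) (fun _ => 1 : R) x * (x == y0)%:R).
      by apply: eq_bigr => y _; rewrite mul1r.
    exact: sum_delta.
  by rewrite subrr.
by rewrite L Rr.
Qed.

Lemma left_identity (mu : S -> R) (Q : S -> S -> R) (c : R) (u : S -> R) y0 :
  y0 \in ks ->
  (forall x, x \in ks -> u x - \sum_(z <- ks) G x z * u z = (x == y0)%:R - p y0) ->
  \sum_(x <- ks) mu x = 1 ->
  (forall y, y \in ks -> \sum_(x <- ks) mu x * Q x y = c * mu y) ->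
  mu y0 - p y0 = (1 - c) * (\sum_(x <- ks) mu x * u x)
     - \sum_(z <- ks) (\sum_(x <- ks) mu x * (G x z - Q x z)) * u z.
Proof.
move=> y0k hu mu1 hQ.
have e1 : mu y0 - p y0 = \sum_(x <- ks) mu x * (u x - \sum_(z <- ks) G x z * u z).
  rewrite (eq_big_seq (fun x => mu x * ((x == y0)%:R - p y0))); last first.
    by move=> x xk; rewrite hu.
  under eq_bigr do rewrite mulrBr.
  by rewrite big_split /= sumrN sum_delta // -big_distrl /= mu1 mul1r.
rewrite e1.
under eq_bigr do rewrite mulrBr.
rewrite big_split /= sumrN.
have e2 : \sum_(x <- ks) mu x * \sum_(z <- ks) G x z * u z =
          \sum_(z <- ks) (\sum_(x <- ks) mu x * G x z) * u z.
  under eq_bigr do rewrite big_distrr /=.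
  rewrite exchange_big /=; apply: eq_bigr => z _.
  by rewrite big_distrl /=; apply: eq_bigr => x _; rewrite mulrA.
rewrite e2.
have e3 : \sum_(z <- ks) (\sum_(x <- ks) mu x * G x z) * u z =
   c * (\sum_(x <- ks) mu x * u x) +
   \sum_(z <- ks) (\sum_(x <- ks) mu x * (G x z - Q x z)) * u z.
  rewrite big_distrr /= -big_split /=; apply: eq_big_seq => z zk.
  rewrite mulrA -hQ // -mulrDl; congr (_ * _).
  by rewrite -big_split /=; apply: eq_bigr => x _; rewrite -mulrDr addrC subrK.
rewrite e3 mulrBl mul1r opprD addrA.
done.
Qed.

Lemma c_identity (h : S -> R) (Q : S -> S -> R) (c : R) :
  \sum_(y <- ks) p y * h y = 1 ->
  (forall x, x \in ks -> \sum_(y <- ks) Q x y * h y = c * h x) ->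
  1 - c = \sum_(x <- ks) p x * \sum_(y <- ks) (G x y - Q x y) * h y.
Proof.
move=> ph1 hQ.
have ec : c = \sum_(x <- ks) p x * \sum_(y <- ks) Q x y * h y.
  rewrite -[LHS]mulr1 -ph1 big_distrr /=; apply: eq_big_seq => x xk.
  by rewrite hQ // mulrCA.
rewrite ec -{1}ph1 -pG_sum -sumrB; apply: eq_bigr => x _.
by rewrite -mulrBr -sumrB; congr (_ * _); apply: eq_bigr => y _; rewrite mulrBl.
Qed.

Lemma right_identity (h : S -> R) (Q : S -> S -> R) (c : R) (v : S -> R) y0 :
  y0 \in ks ->
  (forall y, y \in ks -> v y - \sum_(x <- ks) v x * G x y = (y == y0)%:R - p y) ->
  \sum_(y <- ks) p y * h y = 1 ->
  (forall x, x \in ks -> \sum_(y <- ks) Q x y * h y = c * h x) ->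
  h y0 - 1 = \sum_(x <- ks) v x * ((1 - c) * h x
                - \sum_(z <- ks) (G x z - Q x z) * h z).
Proof.
move=> y0k hv ph1 hQ.
have e1 : h y0 - 1 = \sum_(y <- ks) (v y - \sum_(x <- ks) v x * G x y) * h y.
  rewrite (eq_big_seq (fun y => ((y == y0)%:R - p y) * h y)); last first.
    by move=> y yk; rewrite hv.
  under eq_bigr do rewrite mulrBl.
  rewrite big_split /= sumrN ph1; congr (_ - _).
  transitivity (\sum_(x <- ks) h x * (x == y0)%:R); first by rewrite sum_delta.
  by apply: eq_bigr => y _; rewrite mulrC.
rewrite e1.
under eq_bigr do rewrite mulrBl.
rewrite big_split /= sumrN.
have e2 : \sum_(y <- ks) (\sum_(x <- ks) v x * G x y) * h y =
          \sum_(x <- ks) v x * \sum_(y <- ks) G x y * h y.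
  under eq_bigr do rewrite big_distrl /=.
  rewrite exchange_big /=; apply: eq_bigr => x _.
  by rewrite big_distrr /=; apply: eq_bigr => y _; rewrite mulrA.
rewrite e2 -sumrB; apply: eq_big_seq => x xk.
rewrite -mulrBr; congr (_ * _).
have -> : \sum_(y <- ks) G x y * h y =
   c * h x + \sum_(z <- ks) (G x z - Q x z) * h z.
  rewrite -hQ // -big_split /=; apply: eq_bigr => y _.
  by rewrite -mulrDl addrC subrK.
by rewrite mulrBl mul1r opprD addrA.
Qed.

Lemma cvg0_sum (F : S -> nat -> R) :
  (forall z, z \in ks -> F z n @[n --> \oo] --> 0) ->
  \sum_(z <- ks) F z n @[n --> \oo] --> 0.
Proof.
move=> H; have := cvg_sum_seq_in H; rewrite big1 //.
Qed.

Lemma cvg_sub0 (a : nat -> R) (l : R) :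
  a n - l @[n --> \oo] --> 0 -> a n @[n --> \oo] --> l.
Proof.
move=> H; have := cvgD' H (@cvgC' _ l); rewrite add0r.
by under eq_cvg do rewrite subrK.
Qed.

Lemma GQ0 (Q : nat -> S -> S -> R) x z :
  Q n x z @[n --> \oo] --> G x z -> G x z - Q n x z @[n --> \oo] --> 0.
Proof. by move=> H; have := cvgB' (@cvgC' _ (G x z)) H; rewrite subrr. Qed.

Lemma conv_left (Q : nat -> S -> S -> R) (mu : nat -> S -> R) (c : nat -> R) y0 :
  y0 \in ks ->
  (forall x y, x \in ks -> y \in ks -> Q n x y @[n --> \oo] --> G x y) ->
  (forall n x, x \in ks -> 0 <= mu n x) -> (forall n, \sum_(x <- ks) mu n x = 1) ->
  (forall n y, y \in ks -> \sum_(x <- ks) mu n x * Q n x y = c n * mu n y) ->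
  c n @[n --> \oo] --> (1 : R) ->
  mu n y0 @[n --> \oo] --> p y0.
Proof.
move=> y0k hQ mu0 musum hst hc.
have [u hu] := poisson_right y0k.
have mu1 : forall n x, x \in ks -> `|mu n x| <= 1.
  move=> n x xk; rewrite ger0_norm ?mu0 // -(musum n).
  by apply: single_le_sum => // y yk; exact: mu0.
apply: cvg_sub0.
have -> : (fun n => mu n y0 - p y0) = (fun n => (1 - c n) * (\sum_(x <- ks) mu n x * u x)
     - \sum_(z <- ks) (\sum_(x <- ks) mu n x * (G x z - Q n x z)) * u z).
  by apply: funext => n; exact: (left_identity y0k hu (musum _) (hst _)).
rewrite -[X in _ --> X](subr0 0); apply: cvgB'.
  have -> : (fun n => (1 - c n) * (\sum_(x <- ks) mu n x * u x)) =
     (fun n => (\sum_(x <- ks) mu n x * u x) * (1 - c n)).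
    by apply: funext => n; rewrite mulrC.
  apply: (@bnd_null _ _ _ (\sum_(x <- ks) `|u x|)).
    move=> n; apply: le_trans (ler_norm_sum _ _ _) _.
    rewrite big_seq [X in _ <= X]big_seq; apply: ler_sum => x xk.
    by rewrite normrM ler_piMl // mu1.
  by have := cvgB' (@cvgC' _ 1) hc; rewrite subrr.
apply: (@cvg0_sum (fun z n => (\sum_(x <- ks) mu n x * (G x z - Q n x z)) * u z)) => z zk.
rewrite -[X in _ --> X](mul0r (u z)); apply: cvgM'; last exact: cvgC'.
apply: (@cvg0_sum (fun x n => mu n x * (G x z - Q n x z))) => x xk.
apply: (@bnd_null _ _ _ 1); first by move=> n; exact: mu1.
exact: GQ0 (hQ _ _ xk zk).
Qed.

Lemma conv_right (Q : nat -> S -> S -> R) (h : nat -> S -> R) (c : nat -> R) :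
  (forall x y, x \in ks -> y \in ks -> Q n x y @[n --> \oo] --> G x y) ->
  (forall n x, x \in ks -> 0 <= h n x) ->
  (forall n, \sum_(y <- ks) p y * h n y = 1) ->
  (forall n x, x \in ks -> \sum_(y <- ks) Q n x y * h n y = c n * h n x) ->
  (forall x, x \in ks -> 0 < p x) ->
  c n @[n --> \oo] --> (1 : R) /\ (forall y0, y0 \in ks -> h n y0 @[n --> \oo] --> (1 : R)).
Proof.
move=> hQ h0 ph1 hQh p0.
have hb : forall n x, x \in ks -> `|h n x| <= (p x)^-1.
  move=> n x xk; rewrite ger0_norm ?h0 //.
  have ph : p x * h n x <= 1.
    rewrite -(ph1 n); apply: (@single_le_sum (fun y => p y * h n y)) => // y yk.
    by rewrite mulr_ge0 ?h0 // ltW // p0.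
  rewrite -(mulKf (lt0r_neq0 (p0 x xk)) (h n x)) -[X in _ <= X]mulr1.
  by apply: ler_wpM2l => //; rewrite invr_ge0 ltW // p0.
have t0 : forall x, x \in ks ->
    \sum_(y <- ks) (G x y - Q n x y) * h n y @[n --> \oo] --> 0.
  move=> x xk; apply: (@cvg0_sum (fun y n => (G x y - Q n x y) * h n y)) => y yk.
  have -> : (fun n => (G x y - Q n x y) * h n y) = (fun n => h n y * (G x y - Q n x y)).
    by apply: funext => n; rewrite mulrC.
  apply: (@bnd_null _ _ _ (p y)^-1); first by move=> n; exact: hb.
  exact: GQ0 (hQ _ _ xk yk).
have hc : c n @[n --> \oo] --> (1 : R).
  apply: cvg_sub0.
  have : 1 - c n @[n --> \oo] --> (0 : R).
    have -> : (fun n => 1 - c n) = (fun n => \sum_(x <- ks) p x * \sum_(y <- ks) (G x y - Q n x y) * h n y).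
      by apply: funext => n; exact: (c_identity (ph1 _) (hQh _)).
    apply: (@cvg0_sum (fun x n => p x * \sum_(y <- ks) (G x y - Q n x y) * h n y)) => x xk.
    rewrite -[X in _ --> X](mulr0 (p x)); apply: cvgM'; first exact: cvgC'.
    exact: t0.
  move=> H; have := cvgB' (@cvgC' _ 0) H; rewrite subrr.
  have -> : (fun n => 0 - (1 - c n)) = (fun n => c n - 1).
    by apply: funext => n /=; rewrite sub0r opprB.
  done.
split => // y0 y0k.
have [v hv] := poisson_left y0k.
apply: cvg_sub0.
have -> : (fun n => h n y0 - 1) = (fun n => \sum_(x <- ks) v x * ((1 - c n) * h n x
                - \sum_(z <- ks) (G x z - Q n x z) * h n z)).
  by apply: funext => n; exact: (right_identity y0k hv (ph1 _) (hQh _)).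
apply: (@cvg0_sum (fun x n => v x * ((1 - c n) * h n x
                - \sum_(z <- ks) (G x z - Q n x z) * h n z))) => x xk.
rewrite -[X in _ --> X](mulr0 (v x)); apply: cvgM'; first exact: cvgC'.
rewrite -[X in _ --> X](subr0 0); apply: cvgB'; last exact: t0.
have -> : (fun n => (1 - c n) * h n x) = (fun n => h n x * (1 - c n)).
  by apply: funext => n; rewrite mulrC.
apply: (@bnd_null _ (fun n => h n x) (fun n => 1 - c n) (p x)^-1).
  by move=> n; exact: hb.
by have := cvgB' (@cvgC' _ 1) hc; rewrite subrr.
Qed.

End conv.

Section final1.
Import numFieldNormedType.Exports.
Context {R : realType} {S : countType}.
Context (P : S -> S -> R) (pi : S -> R) (K : set S) (A : nat -> set S).
Context (P0 : forall x y, (0 <= P x y)%R).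
Context (psum : forall x, (\esum_(y in [set: S]) (P x y)%:E = 1)%E).
Context (pi0 : forall x, (0 <= pi x)%R).
Context (pisum : (\esum_(x in [set: S]) (pi x)%:E = 1)%E).
Context (pistat : forall y, (\esum_(x in [set: S]) (pi x * P x y)%:E = (pi y)%:E)%E).
Context (Pirr : irreducible P) (Prec : positive_recurrent P).
Context (Kfin : finite_set K) (k0 : S) (Kk0 : K k0).
Context (AK : forall n, K `<=` A n) (Amono : forall n, A n `<=` A n.+1)
        (Acover : \bigcup_n A n = [set: S]).

Definition ks := finmap.enum_fset (fset_set K).

Lemma memks x : x \in ks <-> K x.
Proof.
split => H.
  by apply: set_mem; rewrite -(in_fset_set Kfin x); exact: H.
by have := mem_set H; rewrite -(in_fset_set Kfin x).
Qed.

Lemma ks_uniq : uniq ks.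
Proof. exact: finmap.fset_uniq. Qed.

Lemma esumK (f : S -> \bar R) : (forall x, K x -> (0 <= f x)%E) ->
  \esum_(x in K) f x = \sum_(x <- ks) f x.
Proof.
move=> f0; rewrite esum_fset //; last by move=> i; rewrite inE; exact: f0.
by rewrite fsbig_finite.
Qed.

Lemma esumKR (f : S -> R) : (forall x, K x -> 0 <= f x) ->
  \esum_(x in K) (f x)%:E = (\sum_(x <- ks) f x)%:E.
Proof. by move=> f0; rewrite esumK ?sumEFin // => x Kx; rewrite lee_fin f0. Qed.

Lemma AVn_sub n : avoid_paths (A n) K `<=` AV K.
Proof.
move=> s H z zs; move: (H z zs); rewrite !in_setE => -[_ nK]; by split.
Qed.

Lemma AVn_mono n : avoid_paths (A n) K `<=` avoid_paths (A n.+1) K.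
Proof.
move=> s H z zs; move: (H z zs); rewrite !in_setE => -[An nK]; split => //.
exact: Amono.
Qed.

Lemma AVn_cover s : AV K s -> exists n, avoid_paths (A n) K s.
Proof.
move=> /AVP H.
have [n Hn] : exists n, forall z, z \in s -> A n z.
  apply: seq_in_some_n => // z zs.
  have : (\bigcup_n A n) z by rewrite Acover.
  by case=> n _ Anz; exists n.
by exists n => z zs; rewrite in_setE; split; [exact: Hn|exact: H].
Qed.

Lemma killed_cvg (r : S -> R) x : (forall y, 0 <= r y) ->
  killed_exp P (A n) K r x @[n --> \oo] --> killed_exp P [set: S] K r x.
Proof.
move=> r0; apply: esum_incr_cvg.
- exact: AVn_mono.
- exact: AVn_sub.
- exact: AVn_cover.
- by move=> s _; rewrite lee_fin mulr_ge0 // pathw_ge0.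
Qed.

Lemma Gker_cvg x y :
  Gker P (A n) K x y @[n --> \oo] --> GG P K x y.
Proof.
apply: esum_incr_cvg.
- exact: AVn_mono.
- exact: AVn_sub.
- exact: AVn_cover.
- by move=> s _; rewrite lee_fin pathw_ge0.
Qed.

Lemma Gker_le n x y : (Gker P (A n) K x y <= GG P K x y)%E.
Proof.
by apply: esum_subset; [exact: AVn_sub|move=> s _; rewrite lee_fin pathw_ge0].
Qed.

Lemma Gker_ge0 n x y : (0 <= Gker P (A n) K x y)%E.
Proof. by apply: esum_ge0 => s _; rewrite lee_fin pathw_ge0. Qed.

Lemma GG_le1 x y : K x -> K y -> (GG P K x y <= 1)%E.
Proof.
move=> Kx Ky; rewrite -(G_stoch P0 psum (b_fin P0 Prec Kx)).
by apply: (@esum_ge1 _ _ K (GG P K x)) => // t _; exact: GG_ge0.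
Qed.

Lemma GG_fin x y : K x -> K y -> GG P K x y \is a fin_num.
Proof.
move=> Kx Ky; rewrite ge0_fin_numE ?GG_ge0 //.
by apply: le_lt_trans (GG_le1 Kx Ky) _; rewrite ltry.
Qed.

Definition Gl x y := fine (GG P K x y).

Lemma GlE x y : K x -> K y -> (Gl x y)%:E = GG P K x y.
Proof. by move=> Kx Ky; rewrite fineK // GG_fin. Qed.

Lemma Gl_ge0 x y : 0 <= Gl x y.
Proof. by apply: fine_ge0; exact: GG_ge0. Qed.

Lemma Gn_le n x y : K x -> K y -> Gmat P (A n) K x y <= Gl x y.
Proof.
move=> Kx Ky; rewrite -lee_fin GlE // /Gmat fineK; first exact: Gker_le.
rewrite ge0_fin_numE ?Gker_ge0 //; apply: le_lt_trans (Gker_le n x y) _.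
by apply: le_lt_trans (GG_le1 Kx Ky) _; rewrite ltry.
Qed.

Lemma Gn_ge0 n x y : 0 <= Gmat P (A n) K x y.
Proof. by apply: fine_ge0; exact: Gker_ge0. Qed.

Lemma Gn_cvg x y : K x -> K y ->
  Gmat P (A n) K x y @[n --> \oo] --> Gl x y.
Proof.
move=> Kx Ky; have := @Gker_cvg x y; rewrite -GlE // => /fine_cvg; exact.
Qed.

Lemma Gl_row x : K x -> \sum_(y <- ks) Gl x y = 1.
Proof.
move=> Kx; have := G_stoch P0 psum (b_fin P0 Prec Kx).
rewrite esumK; last by move=> y _; exact: GG_ge0.
rewrite big_seq (eq_bigr (fun y => (Gl x y)%:E)); last first.
  by move=> y /memks Ky; rewrite GlE.
by rewrite -big_seq sumEFin => -[].
Qed.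

Definition piK := \sum_(x <- ks) pi x.

Lemma piK_gt0 : 0 < piK.
Proof.
rewrite /piK (bigD1_seq k0) ?ks_uniq //=; last exact/memks.
by rewrite ltr_wpDr ?sumr_ge0 // (pi_gt0 P0 pi0 pisum pistat Pirr).
Qed.

Definition pbar x := pi x / piK.

Lemma pbar_sum : \sum_(x <- ks) pbar x = 1.
Proof. by rewrite /pbar -big_distrl /= -/piK divff // lt0r_neq0 // piK_gt0. Qed.

Lemma pbar_gt0 x : 0 < pbar x.
Proof. by rewrite /pbar divr_gt0 ?piK_gt0 // (pi_gt0 P0 pi0 pisum pistat Pirr). Qed.

Lemma pbar_stat y : K y -> \sum_(x <- ks) pbar x * Gl x y = pbar y.
Proof.
move=> Ky; have := piG_eq P0 psum pi0 pisum pistat Prec Ky.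
rewrite esumK; last by move=> x _; rewrite mule_ge0 ?lee_fin ?GG_ge0.
rewrite big_seq (eq_bigr (fun x => (pi x * Gl x y)%:E)); last first.
  by move=> x /memks Kx; rewrite EFinM GlE.
rewrite -big_seq sumEFin => -[e].
rewrite /pbar -e big_distrl /=; apply: eq_bigr => x _; by rewrite mulrAC.
Qed.

Lemma pathw_mono (F1 F2 : S -> S -> R) x s :
  (forall a b, K a -> K b -> 0 <= F1 a b <= F2 a b) -> K x ->
  (forall z, z \in s -> K z) -> pathw F1 x s <= pathw F2 x s.
Proof.
move=> H; elim: s x => [|z s IH] x Kx sK //=.
have Kz : K z by apply: sK; rewrite inE eqxx.
have sK' : forall w, w \in s -> K w by move=> w ws; apply: sK; rewrite inE ws orbT.
have [h1 h2] := andP (H x z Kx Kz).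
apply: ler_pM => //; last exact: IH.
have : forall t, (forall z, z \in t -> K z) -> forall w, K w -> 0 <= pathw F1 w t.
  elim=> [|a t IHt] tK w Kw //=; have Ka : K a by apply: tK; rewrite inE eqxx.
  have [g1 _] := andP (H w a Kw Ka); apply: mulr_ge0 => //.
  by apply: IHt => // b bt; apply: tK; rewrite inE bt orbT.
by move=> /(_ s sK' z Kz).
Qed.

Lemma Gl_irr (Girr0 : irreducible_on K (Gmat P (A 0) K)) x y :
  x \in ks -> y \in ks -> exists s : seq S,
   (forall z, z \in s -> z \in ks) /\ last x s = y /\ 0 < pathw Gl x s.
Proof.
move=> /memks Kx /memks Ky; have [s [_ [sK [lst pos]]]] := Girr0 x y Kx Ky.
exists s; split; first by move=> z zs; apply/memks; exact: sK.
split => //; apply: lt_le_trans pos _; apply: pathw_mono => // a b Ka Kb.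
by rewrite Gn_ge0 Gn_le.
Qed.

End final1.

Section final2.
Import numFieldNormedType.Exports.
Context {R : realType} {S : countType}.
Context (P : S -> S -> R) (pi : S -> R) (K : set S) (A : nat -> set S).
Context (P0 : forall x y, (0 <= P x y)%R).
Context (psum : forall x, (\esum_(y in [set: S]) (P x y)%:E = 1)%E).
Context (pi0 : forall x, (0 <= pi x)%R).
Context (pisum : (\esum_(x in [set: S]) (pi x)%:E = 1)%E).
Context (pistat : forall y, (\esum_(x in [set: S]) (pi x * P x y)%:E = (pi y)%:E)%E).
Context (Pirr : irreducible P) (Prec : positive_recurrent P).
Context (Kfin : finite_set K) (k0 : S) (Kk0 : K k0).
Context (AK : forall n, K `<=` A n) (Amono : forall n, A n `<=` A n.+1)
        (Acover : \bigcup_n A n = [set: S]).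
Local Open Scope ereal_scope.

Local Notation ks := (ks K).
Local Notation piK := (piK pi K).
Local Notation pbar := (pbar pi K).

Lemma killed_ge0 B r x : (forall y, 0 <= r y)%R -> 0 <= killed_exp P B K r x.
Proof.
by move=> r0; apply: esum_ge0 => s _; rewrite lee_fin mulr_ge0 // pathw_ge0.
Qed.

Lemma N_cvg (mu : nat -> S -> R) (r : S -> R) : (forall y, 0 <= r y)%R ->
  (forall n x, K x -> 0 <= mu n x)%R ->
  (forall y, K y -> mu n y @[n --> \oo] --> pbar y) ->
  \esum_(x in K) ((mu n x)%:E * killed_exp P (A n) K r x) @[n --> \oo] -->
  (piK^-1)%:E * \esum_(y in [set: S]) ((pi y * r y)%R)%:E.
Proof.
move=> r0 mu0 hmu.
rewrite -(cycle_formula P0 psum pi0 pisum pistat Pirr Prec Kk0 r0).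
rewrite esumK //; last by move=> x _; rewrite mule_ge0 ?lee_fin ?pi0 ?killed_ge0.
rewrite ge0_sume_distrr; last by move=> x _; rewrite mule_ge0 ?lee_fin ?pi0 ?killed_ge0.
have -> : (fun n => \esum_(x in K) ((mu n x)%:E * killed_exp P (A n) K r x)) =
  (fun n => \sum_(x <- ks | x \in ks) ((mu n x)%:E * killed_exp P (A n) K r x)).
  apply: funext => n; rewrite esumK // -?big_seq // => x Kx.
  by apply: mule_ge0; [rewrite lee_fin mu0 | exact: killed_ge0].
rewrite big_seq.
apply: cvg_nnesum.
  move=> x /(memks Kfin) Kx; apply: nearW => n.
  by apply: mule_ge0; [rewrite lee_fin mu0 | exact: killed_ge0].
move=> x /(memks Kfin) Kx; rewrite muleA -EFinM (mulrC (piK^-1)%R) -/(pbar x).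
apply: cvgeM.
- have [fin|nfin] := boolP (killed_exp P [set: S] K r x \is a fin_num).
    exact: mule_def_fin.
  apply: mule_def_neq0_infty => //; rewrite eqe; apply: lt0r_neq0; exact: (pbar_gt0 P0 pi0 pisum pistat Pirr Kfin Kk0).
- apply: cvg_EFin; first exact: nearW.
  exact: hmu.
- exact: killed_cvg.
Qed.

Lemma tilde_cvg (mu : nat -> S -> R) (r : S -> R) : (forall y, 0 <= r y)%R ->
  (forall n x, K x -> 0 <= mu n x)%R ->
  (forall y, K y -> mu n y @[n --> \oo] --> pbar y) ->
  tilde_pi P (A n) K (mu n) r @[n --> \oo] -->
  \esum_(y in [set: S]) ((pi y * r y)%R)%:E.
Proof.
move=> r0 mu0 hmu.
have piK0 : (0 < piK)%R by exact: (piK_gt0 P0 pi0 pisum pistat Pirr Kfin Kk0).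
have hN := N_cvg r0 mu0 hmu.
have hD := @N_cvg mu (fun _ => 1%R) (fun _ => ler01) mu0 hmu.
have Pi1 : \esum_(y in [set: S]) ((pi y * 1)%R)%:E = 1.
  by rewrite -pisum; apply: eq_esum => y _; rewrite mulr1.
rewrite Pi1 mule1 in hD.
set D := fun n => \esum_(x in K) ((mu n x)%:E * killed_exp P (A n) K (fun _ => 1%R) x).
set N := fun n => \esum_(x in K) ((mu n x)%:E * killed_exp P (A n) K r x).
have hfin : \forall n \near \oo, D n \is a fin_num := cvg_is_fine hD.
have hd : fine \o D @ \oo --> (piK^-1)%R by exact: fine_cvg.
have hpos : \forall n \near \oo, (0 < fine (D n))%R.
  by apply: (@cvgr_gt _ _ _ _ (fine \o D) _ hd 0%R); rewrite invr_gt0.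
have hinv : ((fine (D n))^-1)%R%:E @[n --> \oo] --> piK%:E.
  apply: cvg_EFin; first exact: nearW.
  rewrite -[X in _ --> X]invrK; apply: cvgV => //.
  by rewrite invr_eq0 lt0r_neq0.
set Pr := \esum_(y in [set: S]) ((pi y * r y)%R)%:E.
have md : ((piK^-1)%:E * Pr) *? piK%:E.
  rewrite mule_defC; have [fin|nfin] := boolP (((piK^-1)%:E * Pr) \is a fin_num).
    exact: mule_def_fin.
  by apply: mule_def_neq0_infty => //; rewrite eqe lt0r_neq0.
have main : N n * ((fine (D n))^-1)%R%:E @[n --> \oo] --> ((piK^-1)%:E * Pr) * piK%:E.
  by apply: cvgeM.
rewrite muleAC -EFinM mulVf ?mul1e ?lt0r_neq0 // in main.
apply: (cvg_trans _ main); apply: near_eq_cvg; near=> n.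
have Dfin : D n \is a fin_num by near: n.
have Dpos : (0 < fine (D n))%R by near: n.
rewrite /tilde_pi -/(N n) -/(D n); congr (_ * _).
by rewrite -[in RHS](fineK Dfin) inver ifF //; apply/negbTE; rewrite lt0r_neq0.
Unshelve. all: by end_near.
Qed.

End final2.

Section final3.
Import numFieldNormedType.Exports.
Context {R : realType} {S : countType}.
Context (P : S -> S -> R) (pi : S -> R) (K : set S) (A : nat -> set S).
Context (P0 : forall x y, (0 <= P x y)%R).
Context (psum : forall x, (\esum_(y in [set: S]) (P x y)%:E = 1)%E).
Context (pi0 : forall x, (0 <= pi x)%R).
Context (pisum : (\esum_(x in [set: S]) (pi x)%:E = 1)%E).
Context (pistat : forall y, (\esum_(x in [set: S]) (pi x * P x y)%:E = (pi y)%:E)%E).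
Context (Pirr : irreducible P) (Prec : positive_recurrent P).
Context (Kfin : finite_set K) (k0 : S) (Kk0 : K k0).
Context (AK : forall n, K `<=` A n) (Amono : forall n, A n `<=` A n.+1)
        (Acover : \bigcup_n A n = [set: S]).
Context (Girr0 : irreducible_on K (Gmat P (A 0) K)).

Local Notation ks := (ks K).
Local Notation pbar := (pbar pi K).
Local Notation Gl := (Gl P K).
Local Notation Gn n := (Gmat P (A n) K).

Let memks := memks Kfin.
Let ksu : uniq ks := ks_uniq K.
Let G0 : forall x y, x \in ks -> y \in ks -> 0 <= Gl x y.
Proof. by move=> x y _ _; exact: Gl_ge0. Qed.
Let Grow : forall x, x \in ks -> \sum_(y <- ks) Gl x y = 1.
Proof. by move=> x /memks Kx; exact: (Gl_row P0 psum Prec Kfin Kx). Qed.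
Let Girr := Gl_irr P0 psum Prec Kfin Girr0.
Let pstat : forall y, y \in ks -> \sum_(x <- ks) pbar x * Gl x y = pbar y.
Proof. by move=> y /memks Ky; exact: (pbar_stat P0 psum pi0 pisum pistat Prec Kfin Ky). Qed.
Let psum1 : \sum_(x <- ks) pbar x = 1.
Proof. exact: (pbar_sum P0 pi0 pisum pistat Pirr Kfin Kk0). Qed.
Let pbar_pos x : 0 < pbar x.
Proof. exact: (pbar_gt0 P0 pi0 pisum pistat Pirr Kfin Kk0). Qed.

Lemma Gker_fin n x y : K x -> K y -> Gker P (A n) K x y \is a fin_num.
Proof.
move=> Kx Ky; rewrite ge0_fin_numE ?(Gker_ge0 K A P0 n x y) //.
apply: le_lt_trans (Gker_le K A P0 n x y) _.
by apply: le_lt_trans (GG_le1 P0 psum Prec Kx Ky) _; rewrite ltry.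
Qed.

Lemma den_eq n x : K x ->
  fine (\esum_(y' in K) Gker P (A n) K x y') = \sum_(y <- ks) Gn n x y.
Proof.
move=> Kx; rewrite (esumK Kfin) //; last by move=> y _; exact: Gker_ge0.
rewrite big_seq (eq_bigr (fun y => (Gn n x y)%:E)); last first.
  by move=> y /memks Ky; rewrite /Gmat fineK // Gker_fin.
by rewrite -big_seq sumEFin.
Qed.

Lemma P2_ge0 n x y : K x -> 0 <= P2mat P (A n) K x y.
Proof.
move=> Kx; rewrite /P2mat divr_ge0 ?(Gn_ge0 K A P0 n x y) //.
by apply: fine_ge0; apply: esum_ge0 => t _; exact: Gker_ge0.
Qed.

Lemma P2_cvg x y : K x -> K y ->
  P2mat P (A n) K x y @[n --> \oo] --> Gl x y.
Proof.
move=> Kx Ky.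
suff : P2mat P (A n) K x y @[n --> \oo] --> Gl x y * 1^-1 by rewrite invr1 mulr1.
have -> : (fun n => P2mat P (A n) K x y) =
   (fun n => Gn n x y * (\sum_(y' <- ks) Gn n x y')^-1).
  by apply: funext => n; rewrite /P2mat den_eq.
apply: cvgM'; first exact: (Gn_cvg P0 psum Prec Amono Acover Kx Ky).
apply: cvgV; first exact: oner_neq0.
rewrite -(Grow ((memks _).2 Kx)); apply: cvg_sum_seq_in => z /memks Kz.
exact: (Gn_cvg P0 psum Prec Amono Acover Kx Kz).
Qed.

Lemma sum_pos (F : S -> R) : (forall x, x \in ks -> 0 < F x) ->
  0 < \sum_(x <- ks) F x.
Proof.
move=> F0; have k0k : k0 \in ks by apply/memks.
rewrite (bigD1_seq k0) //= ltr_wpDr ?F0 // big_seq_cond sumr_ge0 //.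
by move=> x /andP[xk _]; rewrite ltW // F0.
Qed.

Let HQ x y : x \in ks -> y \in ks -> Gn n x y @[n --> \oo] --> Gl x y.
Proof. by move=> /memks Kx /memks Ky; exact: (Gn_cvg P0 psum Prec Amono Acover Kx Ky). Qed.

Lemma pi2_cvg (pi2 : nat -> S -> R) :
  (forall n, stationary_on K (P2mat P (A n) K) (pi2 n)) ->
  forall y, K y -> pi2 n y @[n --> \oo] --> pbar y.
Proof.
move=> st y Ky.
have mu0 : forall n x, x \in ks -> 0 <= pi2 n x.
  by move=> n x /memks Kx; have [h _] := st n; exact: h x Kx.
have musum : forall n, \sum_(x <- ks) pi2 n x = 1.
  move=> n; have [h0 [h1 _]] := st n.
  by move: h1; rewrite (esumKR Kfin) // => -[].
have hst : forall n z, z \in ks ->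
    \sum_(x <- ks) pi2 n x * P2mat P (A n) K x z = 1 * pi2 n z.
  move=> n z /memks Kz; have [h0 [_ h2]] := st n.
  move: (h2 z Kz); rewrite (esumKR Kfin) ?mul1r; first by case.
  by move=> x Kx; rewrite mulr_ge0 ?h0 ?P2_ge0.
apply: (conv_left k0 ksu G0 Grow Girr pstat psum1 (Q := fun n => P2mat P (A n) K)
  (c := fun _ => 1) ((memks _).2 Ky)).
- move=> a b /memks Ka /memks Kb; exact: P2_cvg.
- exact: mu0.
- exact: musum.
- exact: hst.
- exact: cvg_cst.
Qed.

Lemma nuh_cvg (lam : nat -> R) (h nu : nat -> S -> R) :
  (forall n x, K x -> 0 < h n x /\ 0 < nu n x) ->
  (forall n y, K y ->
     (\esum_(x in K) (nu n x * Gmat P (A n) K x y)%:E = (lam n * nu n y)%:E)%E) ->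
  (forall n x, K x ->
     (\esum_(y in K) (Gmat P (A n) K x y * h n y)%:E = (lam n * h n x)%:E)%E) ->
  (forall n, (\esum_(x in K) (nu n x * h n x)%:E = 1)%E) ->
  forall y, K y -> nu n y * h n y @[n --> \oo] --> pbar y.
Proof.
move=> hn0 nuE hE nh1 y Ky.
have hpos n x : x \in ks -> 0 < h n x by move/memks => Kx; case: (hn0 n x Kx).
have nupos n x : x \in ks -> 0 < nu n x by move/memks => Kx; case: (hn0 n x Kx).
have nuE' : forall n z, z \in ks ->
    \sum_(x <- ks) nu n x * Gn n x z = lam n * nu n z.
  move=> n z /memks Kz; move: (nuE n z Kz); rewrite (esumKR Kfin); first by case.
  by move=> x /memks xk; rewrite mulr_ge0 ?(Gn_ge0 K A P0) // ltW // nupos.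
have hE' : forall n x, x \in ks ->
    \sum_(z <- ks) Gn n x z * h n z = lam n * h n x.
  move=> n x /memks Kx; move: (hE n x Kx); rewrite (esumKR Kfin); first by case.
  by move=> z /memks zk; rewrite mulr_ge0 ?(Gn_ge0 K A P0) // ltW // hpos.
have nh1' : forall n, \sum_(x <- ks) nu n x * h n x = 1.
  move=> n; move: (nh1 n); rewrite (esumKR Kfin); first by case.
  by move=> x /memks xk; rewrite mulr_ge0 // ltW ?nupos ?hpos.
pose sn n := \sum_(x <- ks) nu n x.
pose th n := \sum_(z <- ks) pbar z * h n z.
have sn0 n : 0 < sn n by apply: sum_pos => x xk; exact: nupos.
have th0 n : 0 < th n by apply: sum_pos => x xk; rewrite mulr_gt0 ?hpos.
pose nuh n x := nu n x / sn n.
pose hh n x := h n x / th n.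
have hh0 : forall n x, x \in ks -> 0 <= hh n x.
  by move=> n x xk; rewrite divr_ge0 ?ltW ?hpos ?th0.
have hhsum : forall n, \sum_(z <- ks) pbar z * hh n z = 1.
  move=> n; under eq_bigr do rewrite /hh mulrA.
  by rewrite -big_distrl /= -/(th n) divff // lt0r_neq0.
have hhE : forall n x, x \in ks ->
    \sum_(z <- ks) Gn n x z * hh n z = lam n * hh n x.
  move=> n x xk; under eq_bigr do rewrite /hh mulrA.
  by rewrite -big_distrl /= hE' // mulrA.
have [lam1 hh1] := conv_right k0 ksu G0 Grow Girr pstat psum1 HQ hh0 hhsum hhE
  (fun x _ => pbar_pos x).
have nuh0 : forall n x, x \in ks -> 0 <= nuh n x.
  by move=> n x xk; rewrite divr_ge0 ?ltW ?nupos ?sn0.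
have nuhsum : forall n, \sum_(x <- ks) nuh n x = 1.
  by move=> n; rewrite -big_distrl /= -/(sn n) divff // lt0r_neq0.
have nuhE : forall n z, z \in ks ->
    \sum_(x <- ks) nuh n x * Gn n x z = lam n * nuh n z.
  move=> n z zk; under eq_bigr do rewrite /nuh mulrAC.
  by rewrite -big_distrl /= nuE' // mulrA.
have nuhc : forall y0, y0 \in ks -> nuh n y0 @[n --> \oo] --> pbar y0.
  move=> y0 y0k.
  exact: (conv_left k0 ksu G0 Grow Girr pstat psum1 y0k HQ nuh0 nuhsum nuhE lam1).
have key : forall n, nu n y * h n y =
    (nuh n y * hh n y) / (\sum_(x <- ks) nuh n x * hh n x).
  move=> n.
  have e : forall x, nuh n x * hh n x = nu n x * h n x * (sn n * th n)^-1.
    by move=> x; rewrite /nuh /hh mulrACA invfM.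
  under [in RHS]eq_bigr do rewrite e.
  rewrite -big_distrl /= nh1' mul1r e mulfK // invr_eq0 mulf_neq0 // lt0r_neq0 //.
have -> : (fun n => nu n y * h n y) =
  (fun n => (nuh n y * hh n y) / (\sum_(x <- ks) nuh n x * hh n x)).
  by apply: funext => n; exact: key.
have yk : y \in ks by apply/memks.
have e1 : \sum_(x <- ks) pbar x * 1 = 1.
  by rewrite -[RHS]psum1; apply: eq_bigr => x _; rewrite mulr1.
suff : (nuh n y * hh n y) / (\sum_(x <- ks) nuh n x * hh n x) @[n --> \oo] -->
   (pbar y * 1) / (\sum_(x <- ks) pbar x * 1).
  by rewrite e1 divr1 mulr1.
apply: cvgM'; first by apply: cvgM'; [exact: nuhc | exact: hh1].
apply: cvgV.
  by rewrite e1 oner_neq0.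
apply: cvg_sum_seq_in => x xk; apply: cvgM'; [exact: nuhc | exact: hh1].
Qed.

End final3.


Unset Implicit Arguments. Set Strict Implicit. Set Printing Implicit Defensive.

Theorem proposition2p4 (R : realType) (S : countType) (P : S -> S -> R)
  (pi : S -> R) (K : set S) (A : nat -> set S)
  (lam : nat -> R) (h nu : nat -> S -> R) (pi2 : nat -> S -> R) (r : S -> R) :
  stochastic P -> irreducible P -> positive_recurrent P ->
  stationary_distribution P pi ->
  finite_set K -> K !=set0 ->
  (forall n, finite_set (A n)) -> (forall n, K `<=` A n) ->
  (forall n, A n `<=` A n.+1) -> \bigcup_n A n = [set: S] ->
  (forall n, irreducible_on K (Gmat P (A n) K)) ->
  (* Perron data of G_n *)
  (forall n, 0 < lam n) ->
  (forall n x, K x -> 0 < h n x /\ 0 < nu n x) ->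
  (forall n y, K y ->
     (\esum_(x in K) (nu n x * Gmat P (A n) K x y)%:E = (lam n * nu n y)%:E)%E) ->
  (forall n x, K x ->
     (\esum_(y in K) (Gmat P (A n) K x y * h n y)%:E = (lam n * h n x)%:E)%E) ->
  (forall n, (\esum_(x in K) (nu n x * h n x)%:E = 1)%E) ->
  (* pi_{2,n} is the stationary distribution of P_{2,n} *)
  (forall n, stationary_on K (P2mat P (A n) K) (pi2 n)) ->
  (forall x, 0 <= r x) ->
  (tilde_pi P (A n) K (fun x => nu n x * h n x) r @[n --> \oo] -->
     (\esum_(x in [set: S]) (pi x * r x)%:E)%E) /\
  (tilde_pi P (A n) K (pi2 n) r @[n --> \oo] -->
     (\esum_(x in [set: S]) (pi x * r x)%:E)%E).
Proof.
move=> [P0 psum] Pirr Prec [pi0 [pisum pistat]] Kfin [k0 Kk0] _ _ Amono Acover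
  Girr _ hn0 nuE hE nh1 st r0.
split.
- apply: (tilde_cvg P0 psum pi0 pisum pistat Pirr Prec Kfin Kk0 Amono Acover
    (mu := fun n x => nu n x * h n x) r0).
    move=> n x Kx; have [h1 h2] := hn0 n x Kx; exact: mulr_ge0 (ltW h2) (ltW h1).
  move=> y Ky.
  exact: (nuh_cvg P0 psum pi0 pisum pistat Pirr Prec Kfin Kk0 Amono Acover
    (Girr 0%N) hn0 nuE hE nh1 Ky).
- apply: (tilde_cvg P0 psum pi0 pisum pistat Pirr Prec Kfin Kk0 Amono Acover
    (mu := pi2) r0).
    by move=> n x Kx; have [h0 _] := st n; exact: h0.
  move=> y Ky.
  exact: (pi2_cvg P0 psum pi0 pisum pistat Pirr Prec Kfin Kk0 Amono Acover
    (Girr 0%N) st Ky).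
Qed.
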